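(* Consider a POMDP with finite state space $\mathcal S$, finite action space $\mathcal A$, finite observation space $\mathcal Y$, initial state $S_1\sim\rho$ and dynamics $\Pr(S_{t+1},Y_{t+1}\mid S_{1:t},Y_{1:t},A_{1:t})=P(S_{t+1},Y_{t+1}\mid S_t,A_t)$. Let $Z_t\in\mathcal Z$ be an agent state generated recursively by $Z_{t+1}=\phi(Z_t,Y_{t+1},A_t)$ from a fixed initial value, and let actions be chosen by an arbitrary agent-state based behavior policy $\mu=(\mu_1,\mu_2,\dots)$, i.e. $A_t\sim\mu_t(\cdot\mid Z_t)$. Then the process $\{(S_t,Z_t)\}_{t\ge1}$ is a Markov chain, and consequently the processes $\{(S_t,Z_t,A_t)\}_{t\ge1}$ and $\{(S_t,Y_t,Z_t,A_t)\}_{t\ge1}$ are also Markov chains.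
   Context: Markov chains here are allowed to be time-inhomogeneous. *)

(* Defs.v *)
From HB Require Import structures.
From mathcomp Require Import all_boot all_order all_algebra.
Set Implicit Arguments. Unset Strict Implicit. Unset Printing Implicit Defensive.
Import Order.TTheory GRing.Theory Num.Theory.
Local Open Scope ring_scope.

Section POMDP.
Variables (R : realFieldType) (S A Y Z : finType).
(* rho : joint law of (S_1, Y_1); P s a : law of (S_{t+1}, Y_{t+1}) given
   S_t = s, A_t = a; mu t z : law of A_t given Z_t = z (time index t from 0);
   phi : agent-state update Z_{t+1} = phi Z_t Y_{t+1} A_t; z0 : Z_1. *)
Variables (rho : {ffun S * Y -> R}) (P : S -> A -> {ffun S * Y -> R})
          (mu : nat -> Z -> {ffun A -> R}) (phi : Z -> Y -> A -> Z) (z0 : Z).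

Definition is_distr (T : finType) (p : {ffun T -> R}) : Prop :=
  (forall x, 0 <= p x) /\ \sum_x p x = 1.

(* Probability weight of the tail of a sampled trajectory (s_t, y_t, a_t)
   given the previous triple [prev] and the previous agent state [z]. *)
Fixpoint wrest (t : nat) (z : Z) (prev : S * Y * A) (l : seq (S * Y * A)) : R :=
  match l with
  | [::] => 1
  | (s, y, a) :: l' =>
      let z' := phi z y prev.2 in
      P prev.1.1 prev.2 (s, y) * mu t z' a * wrest t.+1 z' (s, y, a) l'
  end.

Definition weight (l : seq (S * Y * A)) : R :=
  match l with
  | [::] => 1
  | (s, y, a) :: l' => rho (s, y) * mu 0 z0 a * wrest 1 z0 (s, y, a) l'
  end.

Fixpoint full_rest (z : Z) (prev_a : A) (l : seq (S * Y * A)) : seq (S * Y * Z * A) :=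
  match l with
  | [::] => [::]
  | (s, y, a) :: l' => let z' := phi z y prev_a in (s, y, z', a) :: full_rest z' a l'
  end.

Definition full (l : seq (S * Y * A)) : seq (S * Y * Z * A) :=
  match l with
  | [::] => [::]
  | (s, y, a) :: l' => (s, y, z0, a) :: full_rest z0 a l'
  end.

Definition Pr (N : nat) (E : pred (seq (S * Y * Z * A))) : R :=
  \sum_(w : N.-tuple (S * Y * A) | E (full w)) weight w.

(* The process X_t = g (S_t, Y_t, Z_t, A_t) is a (possibly time-inhomogeneous)
   Markov chain: under the law of every finite horizon N, for every time n
   with n+1 < N, conditioning X_{n+1} on the whole past X_0..X_n (of positive
   probability) equals conditioning on X_n alone. *)
Definition markov_chain (T : eqType) (g : S * Y * Z * A -> T) : Prop :=
  forall (N n : nat) (xs : seq T) (x x' : T),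
    (n.+1 < N)%N -> size xs = n ->
    let X := fun w : seq (S * Y * Z * A) => map g w in
    let past := rcons xs x in
    0 < Pr N (fun w => take n.+1 (X w) == past) ->
    Pr N (fun w => take n.+2 (X w) == rcons past x')
      / Pr N (fun w => take n.+1 (X w) == past)
    = Pr N (fun w => drop n (take n.+2 (X w)) == [:: x; x'])
      / Pr N (fun w => drop n (take n.+1 (X w)) == [:: x]).

End POMDP.

(* Main.v *)
Require Import Defs.
From HB Require Import structures.
From mathcomp Require Import all_boot all_order all_algebra.
Set Implicit Arguments. Unset Strict Implicit. Unset Printing Implicit Defensive.
Import Order.TTheory GRing.Theory Num.Theory.
Local Open Scope ring_scope.

Section Aux.
Variable R : realFieldType.

Fixpoint sumR (T : finType) (k : nat) (F : seq T -> R) : R :=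
  match k with
  | 0 => F [::]
  | k'.+1 => sumR k' (fun u => \sum_(x : T) F (rcons u x))
  end.

Lemma sum_tuple_rcons (T : finType) n (F : seq T -> R) :
  \sum_(w : n.+1.-tuple T) F w = \sum_(w : n.-tuple T) \sum_(x : T) F (rcons w x).
Proof.
rewrite pair_bigA /=.
have takeP (w : n.+1.-tuple T) : size (take n w) == n.
  by rewrite size_take size_tuple ltnSn.
rewrite (reindex (fun p : n.-tuple T * T => rcons_tuple p.1 p.2)) //=.
exists (fun w : n.+1.-tuple T => (Tuple (takeP w), tnth w ord_max)).
  move=> [t x] _ /=; congr pair.
    apply: val_inj => /=; by rewrite -cats1 take_size_cat // size_tuple.
  by rewrite (tnth_nth x) /= nth_rcons size_tuple ltnn eqxx.
move=> w _; apply: val_inj => /=.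
rewrite (tnth_nth (tnth w ord_max)) /= -take_nth ?size_tuple //.
by rewrite take_oversize // size_tuple.
Qed.

Lemma sum_tuple_sumR (T : finType) n (F : seq T -> R) :
  \sum_(w : n.-tuple T) F w = sumR n F.
Proof.
elim: n F => [|n IH] F /=.
  rewrite (big_pred1 [tuple]) // => w; rewrite !inE; apply/esym/eqP; exact: tuple0.
by rewrite sum_tuple_rcons (IH (fun u => \sum_x F (rcons u x))).
Qed.
Lemma eq_sumR (T : finType) k (F G : seq T -> R) :
  (forall u, size u = k -> F u = G u) -> sumR k F = sumR k G.
Proof.
elim: k F G => [|k IH] F G H /=; first exact: H.
apply: IH => u Hu; apply: eq_bigr => x _; apply: H; by rewrite size_rcons Hu.
Qed.

Lemma sumRZ (T : finType) k c (F : seq T -> R) :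
  sumR k (fun u => c * F u) = c * sumR k F.
Proof.
elim: k F => [|k IH] F //=.
rewrite -IH; apply: eq_sumR => u _; by rewrite mulr_sumr.
Qed.
End Aux.

Section POMDP.
Variables (R : realFieldType) (S A Y Z : finType).
Variables (rho : {ffun S * Y -> R}) (P : S -> A -> {ffun S * Y -> R})
          (mu : nat -> Z -> {ffun A -> R}) (phi : Z -> Y -> A -> Z) (z0 : Z).
Hypotheses (Hrho : is_distr rho) (HP : forall s a, is_distr (P s a))
  (Hmu : forall t z, is_distr (mu t z)).

Local Notation weight := (weight rho P mu phi z0).
Local Notation full := (@Defs.full S A Y Z phi z0).
Local Notation Pr := (Pr rho P mu phi z0).
Local Notation wrest := (wrest P mu phi).

Fixpoint zr (z : Z) (pa : A) (u : seq (S * Y * A)) (y : Y) : Z :=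
  match u with
  | [::] => phi z y pa
  | (s0, y0, a0) :: u' => zr (phi z y0 pa) a0 u' y
  end.

Lemma full_rest_rcons z pa u s y a :
  full_rest phi z pa (rcons u (s, y, a) : seq (S * Y * A)) =
  rcons (full_rest phi z pa u) (s, y, zr z pa u y, a).
Proof. by elim: u z pa => [|[[s0 y0] a0] u IH] z pa //=; rewrite IH. Qed.

Lemma wrest_rcons t z prev u s y a :
  wrest t z prev (rcons u (s, y, a)) =
  wrest t z prev u * P (last prev u).1.1 (last prev u).2 (s, y)
  * mu (t + size u) (zr z prev.2 u y) a.
Proof.
elim: u t z prev => [|[[s0 y0] a0] u IH] t z prev /=.
  by rewrite addn0 !mul1r mulr1.
by rewrite IH addSnnS !mulrA.
Qed.

Definition zn (u : seq (S * Y * A)) (y : Y) : Z :=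
  match u with
  | [::] => z0
  | (s0, y0, a0) :: u' => zr z0 a0 u' y
  end.

Definition pn (u : seq (S * Y * A)) (sy : S * Y) : R :=
  match u with
  | [::] => rho sy
  | e0 :: u' => P (last e0 u').1.1 (last e0 u').2 sy
  end.

Lemma full_rcons u s y a :
  full (rcons u (s, y, a)) = rcons (full u) (s, y, zn u y, a).
Proof. by case: u => [|[[s0 y0] a0] u] //=; rewrite full_rest_rcons. Qed.

Lemma weight_rcons u s y a :
  weight (rcons u (s, y, a)) = weight u * pn u (s, y) * mu (size u) (zn u y) a.
Proof.
case: u => [|[[s0 y0] a0] u] /=; first by rewrite mulr1 mul1r.
by rewrite wrest_rcons !mulrA add1n.
Qed.

Lemma zr_rcons z pa u s1 y1 a1 y2 :
  zr z pa (rcons u (s1, y1, a1)) y2 = phi (zr z pa u y1) y2 a1.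
Proof. by elim: u z pa => [|[[s0 y0] a0] u IH] z pa //=. Qed.

Lemma zn_rcons u s1 y1 a1 y2 :
  zn (rcons u (s1, y1, a1)) y2 = phi (zn u y1) y2 a1.
Proof. by case: u => [|[[s0 y0] a0] u] //=; rewrite zr_rcons. Qed.

Lemma pn_rcons u e sy : pn (rcons u e) sy = P e.1.1 e.2 sy.
Proof. by case: u => [|e0 u] //=; rewrite last_rcons. Qed.

Lemma size_full_rest z pa (u : seq (S * Y * A)) : size (full_rest phi z pa u) = size u.
Proof. by elim: u z pa => [|[[s0 y0] a0] u IH] z pa //=; rewrite IH. Qed.

Lemma size_full u : size (full u) = size u.
Proof. by case: u => [|[[s0 y0] a0] u] //=; rewrite size_full_rest. Qed.

Lemma pn_ge0 u sy : 0 <= pn u sy.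
Proof. case: u => [|e0 u] /=; [exact: Hrho.1 | exact: (HP _ _).1]. Qed.

Lemma pn_sum u : \sum_sy pn u sy = 1.
Proof. case: u => [|e0 u] /=; [exact: Hrho.2 | exact: (HP _ _).2]. Qed.

Lemma weight_ge0 u : 0 <= weight u.
Proof.
elim/last_ind: u => [|u [[s y] a] IH] /=; first exact: ler01.
rewrite weight_rcons; apply: mulr_ge0; first apply: mulr_ge0 => //.
  exact: pn_ge0.
exact: (Hmu _ _).1.
Qed.

Lemma sum_pair3 (F : S * Y * A -> R) :
  \sum_e F e = \sum_(sy : S * Y) \sum_(a : A) F (sy, a).
Proof.
rewrite pair_bigA /=; apply: eq_bigr => -[sy a] _ //.
Qed.

Lemma weight_sum u : \sum_e weight (rcons u e) = weight u.
Proof.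
rewrite sum_pair3.
transitivity (\sum_(sy : S * Y) weight u * pn u sy).
  apply: eq_bigr => -[s y] _.
  under eq_bigr do rewrite weight_rcons.
  by rewrite -mulr_sumr (Hmu _ _).2 mulr1.
by rewrite -mulr_sumr pn_sum mulr1.
Qed.


Lemma PrE N E :
  Pr N E = sumR N (fun w => if E (full w) then weight w else 0).
Proof. rewrite /Pr big_mkcond; exact: (sum_tuple_sumR N (fun w => if E (full w) then weight w else 0)). Qed.

Lemma marg m k (E : pred (seq (S * Y * Z * A))) :
  (forall l, E l = E (take m l)) -> Pr (m + k) E = Pr m E.
Proof.
move=> HE; rewrite !PrE.
elim: k => [|k IH]; first by rewrite addn0.
rewrite addnS /= -IH; apply: eq_sumR => u Hu.
transitivity (\sum_e (if E (full u) then weight (rcons u e) else 0)).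
  apply: eq_bigr => -[[s y] a] _.
  rewrite full_rcons HE [in RHS]HE -cats1 takel_cat // size_full Hu.
  exact: leq_addr.
by case: (E (full u)); [exact: weight_sum | rewrite big1].
Qed.

Definition mk (u : seq (S * Y * A)) (e : S * Y * A) : S * Y * Z * A :=
  (e.1.1, e.1.2, zn u e.1.2, e.2).

Lemma full_rcons' u e : full (rcons u e) = rcons (full u) (mk u e).
Proof. by case: e => [[s y] a]; rewrite full_rcons. Qed.

Lemma markov_gen (T : eqType) (g : S * Y * Z * A -> T) (Q : nat -> T -> T -> R) :
  (forall u x x',
     \sum_e1 \sum_e2 (if (g (mk u e1) == x) && (g (mk (rcons u e1) e2) == x')
                      then weight (rcons (rcons u e1) e2) else 0)
     = Q (size u) x x' * \sum_e1 (if g (mk u e1) == x then weight (rcons u e1) else 0)) ->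
  markov_chain rho P mu phi z0 g.
Proof.
move=> Hloc N n xs x x' HN Hs /= Hpos.
have HD : 0 < Pr N (fun w => drop n (take n.+1 (map g w)) == [:: x]).
  apply: lt_le_trans Hpos _.
  rewrite /Pr [in X in _ <= X]big_mkcond [in X in X <= _]big_mkcond /=.
  apply: ler_sum => w _.
  case: ifP => HB; last by case: ifP => _ //; exact: weight_ge0.
  by rewrite (eqP HB) -cats1 drop_size_cat ?eqxx.
have tk (l : seq (S * Y * Z * A)) i j : (i <= j)%N ->
    take i (map g (take j l)) = take i (map g l).
  by move=> Hij; rewrite map_take take_takel.
set M := fun u => \sum_e1 (if g (mk u e1) == x then weight (rcons u e1) else 0).
have EX u e1 e2 : map g (full (rcons (rcons u e1) e2)) =
    rcons (rcons (map g (full u)) (g (mk u e1))) (g (mk (rcons u e1) e2)).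
  by rewrite !full_rcons' !map_rcons.
have sL u : size u = n -> size (map g (full u)) = n by rewrite size_map size_full.
have EN : N = (n.+2 + (N - n.+2))%N by rewrite subnKC.
rewrite EN in Hpos HD *.
rewrite !marg; try by move=> l; rewrite tk.

have EA : Pr n.+2 (fun w => take n.+2 (map g w) == rcons (rcons xs x) x')
    = Q n x x' * sumR n (fun u => if map g (full u) == xs then M u else 0).
  rewrite PrE /= -sumRZ; apply: eq_sumR => u Hu.
  case: ifP => HL.
    rewrite -Hu -Hloc; apply: eq_bigr => e1 _; apply: eq_bigr => e2 _.
    by rewrite EX take_oversize ?size_rcons ?sL ?Hu // !(@eqseq_rcons T) HL.
  rewrite mulr0 big1 // => e1 _; rewrite big1 // => e2 _.
  by rewrite EX take_oversize ?size_rcons ?sL ?Hu // !(@eqseq_rcons T) HL.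
have EB : Pr n.+2 (fun w => take n.+1 (map g w) == rcons xs x)
    = sumR n (fun u => if map g (full u) == xs then M u else 0).
  rewrite PrE /=; apply: eq_sumR => u Hu.
  have E1 e1 e2 : take n.+1 (map g (full (rcons (rcons u e1) e2))) =
      rcons (map g (full u)) (g (mk u e1)).
    by rewrite EX -cats1 take_size_cat // size_rcons sL.
  case: ifP => HL.
    apply: eq_bigr => e1 _.
    under eq_bigr do rewrite E1 (@eqseq_rcons T) HL /=.
    by case: ifP => _; [exact: weight_sum | rewrite big1].
  rewrite big1 // => e1 _; rewrite big1 // => e2 _.
  by rewrite E1 (@eqseq_rcons T) HL.
have EC : Pr n.+2 (fun w => drop n (take n.+2 (map g w)) == [:: x; x'])
    = Q n x x' * sumR n M.
  rewrite PrE /= -sumRZ; apply: eq_sumR => u Hu.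
  rewrite -Hu -Hloc; apply: eq_bigr => e1 _; apply: eq_bigr => e2 _.
  rewrite EX take_oversize ?size_rcons ?sL ?Hu // -!cats1 -catA drop_size_cat ?sL //.
  by rewrite /= (@eqseq_cons T) /= (@eqseq_cons T) eqxx andbT.
have ED : Pr n.+2 (fun w => drop n (take n.+1 (map g w)) == [:: x])
    = sumR n M.
  rewrite PrE /=; apply: eq_sumR => u Hu.
  apply: eq_bigr => e1 _.
  have E1 e2 : drop n (take n.+1 (map g (full (rcons (rcons u e1) e2)))) =
      [:: g (mk u e1)].
    by rewrite EX -cats1 take_size_cat ?size_rcons ?sL // -cats1 drop_size_cat ?sL.
  under eq_bigr do rewrite E1 (@eqseq_cons T) andbT.
  by case: ifP => _; [exact: weight_sum | rewrite big1].
move: Hpos HD; rewrite !marg; try by move=> l; rewrite tk.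
rewrite EA EB EC ED => Hpos HD.
by rewrite !mulfK // gt_eqF.
Qed.

Definition Kg (T : eqType) (g : S * Y * Z * A -> T) n s z a (x' : T) : R :=
  \sum_(e2 : S * Y * A)
    (if g (e2.1.1, e2.1.2, phi z e2.1.2 a, e2.2) == x'
     then P s a e2.1 * mu n.+1 (phi z e2.1.2 a) e2.2 else 0).

Lemma inner (T : eqType) (g : S * Y * Z * A -> T) u e1 x x' :
  \sum_e2 (if (g (mk u e1) == x) && (g (mk (rcons u e1) e2) == x')
           then weight (rcons (rcons u e1) e2) else 0)
  = if g (mk u e1) == x
    then weight (rcons u e1) * Kg g (size u) e1.1.1 (zn u e1.1.2) e1.2 x'
    else 0.
Proof.
case: e1 => [[s1 y1] a1].
case: (g (mk u (s1, y1, a1)) == x) => /=; last by rewrite big1.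
rewrite /Kg mulr_sumr; apply: eq_bigr => -[[s2 y2] a2] _ /=.
rewrite /mk /= zn_rcons.
case: ifP => _; last by rewrite mulr0.
by rewrite weight_rcons pn_rcons zn_rcons size_rcons /= mulrA.
Qed.

Lemma claim3 : markov_chain rho P mu phi z0 (fun x : S * Y * Z * A => x).
Proof.
apply: (markov_gen (Q := fun n x x' => Kg (fun x : S * Y * Z * A => x) n x.1.1.1 x.1.2 x.2 x')).
move=> u x x'.
rewrite (eq_bigr _ (fun e1 _ => inner (fun x : S * Y * Z * A => x) u e1 x x')).
rewrite mulr_sumr; apply: eq_bigr => e1 _.
case: ifP => [/eqP <-|_]; last by rewrite mulr0.
exact: mulrC.
Qed.

Lemma claim2 : markov_chain rho P mu phi z0
    (fun x : S * Y * Z * A => (x.1.1.1, x.1.2, x.2)).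
Proof.
apply: (markov_gen (Q := fun n x x' =>
  Kg (fun x : S * Y * Z * A => (x.1.1.1, x.1.2, x.2)) n x.1.1 x.1.2 x.2 x')).
move=> u x x'.
rewrite (eq_bigr _ (fun e1 _ => inner (fun x : S * Y * Z * A => (x.1.1.1, x.1.2, x.2)) u e1 x x')).
rewrite mulr_sumr; apply: eq_bigr => e1 _.
case: ifP => [/eqP <-|_]; last by rewrite mulr0.
exact: mulrC.
Qed.

Lemma claim1 : markov_chain rho P mu phi z0
    (fun x : S * Y * Z * A => (x.1.1.1, x.1.2)).
Proof.
apply: (markov_gen (Q := fun n x x' => \sum_a mu n x.2 a *
  Kg (fun x : S * Y * Z * A => (x.1.1.1, x.1.2)) n x.1 x.2 a x')).
move=> u x x'.
rewrite (eq_bigr _ (fun e1 _ => inner (fun x : S * Y * Z * A => (x.1.1.1, x.1.2)) u e1 x x')).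
rewrite !sum_pair3 mulr_sumr; apply: eq_bigr => -[s1 y1] _.
rewrite /mk /=.
have [<-|_] := eqVneq (s1, zn u y1) x; last by rewrite /= !big1_eq mulr0.
rewrite /= (eq_bigr _ (fun a _ => congr1 (fun t => t * _) (weight_rcons u s1 y1 a))).
rewrite (eq_bigr _ (fun a _ => weight_rcons u s1 y1 a)).
rewrite -[in RHS]mulr_sumr (Hmu _ _).2 mulr1 [in RHS]mulrC mulr_sumr.
apply: eq_bigr => a _.
by rewrite !mulrA.
Qed.

End POMDP.

Unset Implicit Arguments.

Theorem lemma1 (R : realFieldType) (S A Y Z : finType)
  (rho : {ffun S * Y -> R}) (P : S -> A -> {ffun S * Y -> R})
  (mu : nat -> Z -> {ffun A -> R}) (phi : Z -> Y -> A -> Z) (z0 : Z) :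
  is_distr rho ->
  (forall s a, is_distr (P s a)) ->
  (forall t z, is_distr (mu t z)) ->
  markov_chain rho P mu phi z0
    (fun x : S * Y * Z * A => (x.1.1.1, x.1.2)) /\
  markov_chain rho P mu phi z0
    (fun x : S * Y * Z * A => (x.1.1.1, x.1.2, x.2)) /\
  markov_chain rho P mu phi z0
    (fun x : S * Y * Z * A => x).
Proof.
move=> Hrho HP Hmu; split; [exact: claim1 | split; [exact: claim2 | exact: claim3]].
Qed.
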